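(* In the synchronous unauthenticated setting with $n$ parties of which at most $t=\lfloor (n-1)/3\rfloor$ are Byzantine and a computationally unbounded adversary, the protocol ''Synchronous Error-free $\frac{n}{3}$-BA'' described in the context, run on $l$-bit inputs, satisfies Termination, Agreement and Validity of Byzantine agreement (with probability $1$), and has communication complexity $O(nl+n^3+n\mathcal{B}(1))$.
   Context: Model: $n$ parties connected pairwise by reliable authenticated (point-to-point) channels, synchronous; a static, computationally unbounded adversary corrupts up to $t$ parties (Byzantine). No cryptography is used. Communication complexity = worst-case total bits sent by honest parties. Byzantine agreement: each $P_i$ holds an $l$-bit input $m_i$; Termination: every honest party outputs; Agreement: honest outputs equal; Validity: if all honest inputs equal $m$, honest parties output $m$. A single-bit Byzantine broadcast oracle lets a sender broadcast one bit so that all honest parties deliver the same bit, equal to the sender's if the sender is honest; its cost is $\mathcal{B}(1)$. Reed–Solomon $(n,t+1)$ code: $\texttt{ENC}$ maps $t+1$ data symbols to $n$ codeword symbols, any $t+1$ of which determine the data; $\texttt{DEC}$ corrects $c$ errors and $d$ erasures iff $n-(t+1)\ge 2c+d$. $(n,t)$-star of an undirected graph $G$ on vertex set $\mathcal{P}=\{P_1,\dots,P_n\}$: a pair $(\mathcal{C},\mathcal{D})$ with $\mathcal{C}\subseteq\mathcal{D}\subseteq\mathcal{P}$, $|\mathcal{C}|\ge n-2t$, $|\mathcal{D}|\ge n-t$, and every $P_i\in\mathcal{C}$, $P_j\in\mathcal{D}$ adjacent. Procedure $\texttt{STAR}(G)$: let $H$ be the complement of $G$ with edge set $\bar E$; compute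 a maximum matching $M$ of $H$ by a fixed deterministic algorithm; $N$ = matched vertices, $\bar N=\mathcal{P}\setminus N$; $T=\{P_i\in\bar N:\exists (P_j,P_k)\in M,\ (P_i,P_j),(P_i,P_k)\in\bar E\}$; $\mathcal{C}=\bar N\setminus T$; $B=\{P_j\in N:\exists P_k\in\mathcal{C},\ (P_j,P_k)\in\bar E\}$; $\mathcal{D}=\mathcal{P}\setminus B$; output $(\mathcal{C},\mathcal{D})$ if $|\mathcal{C}|\ge n-2t$ and $|\mathcal{D}|\ge n-t$, else output noSTAR. Protocol for $P_i$: (1) Split $m_i$ into $t+1$ blocks of $l/(t+1)$ bits, compute $(s_{i1},\dots,s_{in})=\texttt{ENC}(\text{blocks})$; send $s_{ii}$ to every party and $s_{ij}$ to $P_j$ for each $j$. (2) Form a bit vector $v_i$ of length $n$ with $v_i[j]=1$ iff $s_{ij}=s_{jj}$ and $s_{ii}=s_{ji}$, where $s_{jj}$ and $s_{ji}$ are the values received from $P_j$ in step 1; send $v_i$ to every party. (3) Build graph $G_i$ on $\mathcal{P}$ with edge $(P_x,P_y)$ iff $v_x[y]=v_y[x]=1$ (using the vectors as received by $P_i$), and run $\texttt{STAR}(G_i)$. (4) If it returns $(\mathcal{C}_i,\mathcal{D}_i)$, let $\mathcal{F}_i$ be the set of parties with at least $t+1$ neighbours in $\mathcal{C}_i$ and $\mathcal{E}_i$ the set of parties with at least $2t+1$ neighbours in $\mathcal{F}_i$ (each party counted as its own neighbour); if $|\mathcal{F}_i|\ge 2t+1$ and $|\mathcal{E}_i|\ge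 2t+1$ keep $\mathcal{E}_i$, otherwise (or if noSTAR) set $\mathcal{E}_i=\emptyset$. (5) If $\mathcal{E}_i\ne\emptyset$, broadcast bit $1$ with the single-bit BB oracle and send $\mathcal{E}_i$ as an $n$-bit vector to every party; otherwise broadcast bit $0$. (6) If at least $2t+1$ of these broadcasts deliver $1$: let $\mathbf{E}$ be the sets $\mathcal{E}_x$ received; for each $\mathcal{E}_x\in\mathbf{E}$ let $maj_x$ be a value $v$ with $|\{j\in\mathcal{E}_x: s_{ji}=v\}|\ge\lceil(|\mathcal{E}_x|+1)/2\rceil$ ($s_{ji}$ = value received from $P_j$ in step 1), or $\bot$ if none; find $\mathbf{E}'\subseteq\mathbf{E}$ with $|\mathbf{E}'|\ge t+1$ whose $maj_x$ are all equal to a common value $maj\ne\bot$, and send $maj$ to every party. If fewer than $2t+1$ broadcasts deliver $1$, output a predefined $l$-bit message $m'$ and abort. (7) With $maj_j$ the value received from $P_j$ in step 6, apply $\texttt{DEC}$ to $(maj_1,\dots,maj_n)$ with $c=t$, $d=0$ and output the concatenation of the decoded blocks. *)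

(* Defs.v *)
From mathcomp Require Import all_boot all_order all_algebra.

Set Implicit Arguments.
Unset Strict Implicit.
Unset Printing Implicit Defensive.

Import GRing.Theory.

Definition tB (n : nat) : nat := n.-1 %/ 3.

(* Since the protocol is deterministic, every execution against
   every (rushing, computationally unbounded) adversary is determined by the
   values the corrupt parties send; conversely every choice of values is
   realised by some adversary.  [a1 x y] is what corrupt [x] sends to [y] in
   step 1 (claimed (s_xx, s_xy)), [a2 x y] the vector of step 2, [abb x] the
   bit delivered (to all honest parties alike) by the single-bit BB oracle
   for corrupt sender [x], [a5 x y] the set E_x sent in step 5 and [a6 x y]
   the value maj sent in step 6. *)
Record adversary (n : nat) (F : Type) := Adversary {
  a1 : 'I_n -> 'I_n -> F * F;
  a2 : 'I_n -> 'I_n -> {ffun 'I_n -> bool};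
  abb : 'I_n -> bool;
  a5 : 'I_n -> 'I_n -> {set 'I_n};
  a6 : 'I_n -> 'I_n -> F
}.

Definition is_matching (n : nat) (E : rel 'I_n) (M : {set 'I_n * 'I_n}) : bool :=
  [forall e in M, (nat_of_ord e.1 < nat_of_ord e.2)%N && E e.1 e.2] &&
  [forall e in M, forall e' in M,
     (e != e') ==> [disjoint [set e.1; e.2] & [set e'.1; e'.2]]].

Definition is_max_matching (n : nat) (E : rel 'I_n) (M : {set 'I_n * 'I_n}) : Prop :=
  is_matching E M /\ forall M', is_matching E M' -> #|M'| <= #|M|.

(* Procedure STAR(G), G given by a (reflexive, symmetric) adjacency relation;
   [mm] is the fixed deterministic maximum-matching algorithm. *)
Definition STAR (n : nat) (mm : rel 'I_n -> {set 'I_n * 'I_n}) (G : rel 'I_n)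
  : option ({set 'I_n} * {set 'I_n}) :=
  let t := tB n in
  let Eb := fun x y => ~~ G x y in
  let M := mm Eb in
  let N := [set x | [exists e in M, (e.1 == x) || (e.2 == x)]] in
  let Nb := ~: N in
  let T := [set x in Nb | [exists e in M, Eb x e.1 && Eb x e.2]] in
  let C := Nb :\: T in
  let B := [set j in N | [exists k in C, Eb j k]] in
  let D := ~: B in
  if (n - 2 * t <= #|C|) && (n - t <= #|D|) then Some (C, D) else None.

Section Protocol.

Variable n : nat.
Local Notation t := (tB n).
Local Notation party := 'I_n.
Variable b : nat.                         (* bits per block/symbol: l/(t+1) *)
Variable F : finFieldType.                (* symbol field of the RS code *)
Variable alpha : party -> F.              (* evaluation points *)
Variable rep : F -> b.-tuple bool.
Variable unrep : b.-tuple bool -> F.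
Local Notation l := (t.+1 * b).
Local Notation msg := (l.-tuple bool).
Variable mdef : msg.
Variable mm : rel party -> {set party * party}.

Definition ENC (d : {ffun 'I_t.+1 -> F}) : {ffun party -> F} :=
  [ffun j => \sum_(k < t.+1) d k * alpha j ^+ k]%R.

Definition hdist (u w : {ffun party -> F}) : nat := #|[set j | u j != w j]|.

(* DEC with c = t errors and d = 0 erasures: the data whose codeword is
   within Hamming distance t of the received word. *)
Definition DEC (w : {ffun party -> F}) : {ffun 'I_t.+1 -> F} :=
  if [pick d : {ffun 'I_t.+1 -> F} | hdist (ENC d) w <= t] is Some d then d
  else [ffun => 0%R].

Definition blocks (m : msg) : {ffun 'I_t.+1 -> F} :=
  [ffun k : 'I_t.+1 => unrep [tuple nth false m (k * b + j) | j < b]].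

Definition concat (d : {ffun 'I_t.+1 -> F}) : msg :=
  [tuple nth false (rep (d (inord (i %/ b)))) (i %% b) | i < l].

Variable m : party -> msg.
Variable Cr : {set party}.
Variable A : adversary n F.

(* Step 1 *)
Definition share (i : party) : {ffun party -> F} := ENC (blocks (m i)).
(* what P_i receives from P_j in step 1: (s_jj, s_ji) *)
Definition recv1 (i j : party) : F * F :=
  if j \in Cr then a1 A j i else (share j j, share j i).
Definition rs (i j : party) : F := (recv1 i j).2.   (* s_ji as received by P_i *)
Definition rd (i j : party) : F := (recv1 i j).1.   (* s_jj as received by P_i *)

(* Step 2 *)
Definition vec (i : party) : {ffun party -> bool} :=
  [ffun j => (share i j == rd i j) && (share i i == rs i j)].
Definition recv2 (i x : party) : {ffun party -> bool} :=
  if x \in Cr then a2 A x i else vec x.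

(* Step 3: the graph G_i (every party adjacent to itself) *)
Definition adj (i : party) : rel party :=
  fun x y => (x == y) || (recv2 i x y && recv2 i y x).

(* Step 4 *)
Definition Ecal (i : party) : {set party} :=
  match STAR mm (adj i) with
  | Some (C, _) =>
      let Fs := [set x | t.+1 <= #|[set y in C | adj i x y]|] in
      let Es := [set x | (2 * t).+1 <= #|[set y in Fs | adj i x y]|] in
      if ((2 * t).+1 <= #|Fs|) && ((2 * t).+1 <= #|Es|) then Es else set0
  | None => set0
  end.

(* Step 5 *)
Definition bit (i : party) : bool := Ecal i != set0.
Definition bb (x : party) : bool := if x \in Cr then abb A x else bit x.
Definition send5 (i : party) : option {set party} :=
  if bit i then Some (Ecal i) else None.
Definition recv5 (i x : party) : {set party} :=
  if x \in Cr then a5 A x i else odflt set0 (send5 x).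

(* Step 6 *)
Definition proceed : bool := (2 * t).+1 <= #|[set x | bb x]|.
Definition majx (i x : party) : option F :=
  let Ex := recv5 i x in
  [pick v : F | (#|Ex| + 2) %/ 2 <= #|[set j in Ex | rs i j == v]|].
Definition majv (i : party) : option F :=
  [pick v : F | t.+1 <= #|[set x | bb x && (majx i x == Some v)]|].
Definition send6 (i : party) : option F :=
  if proceed then Some (odflt 0%R (majv i)) else None.
Definition recv6 (i j : party) : F :=
  if j \in Cr then a6 A j i else odflt 0%R (send6 j).

(* Step 7 / output of P_i *)
Definition output (i : party) : msg :=
  if proceed then concat (DEC [ffun j => recv6 i j]) else mdef.

(* Communication complexity: bits sent by honest parties over the
   point-to-point channels (each message to each of the n parties), plus
   cost B1 = B(1) for each of the n invocations of the single-bit BB. *)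
Variable B1 : nat.
Definition honest_bits (i : party) : nat :=
  n * (2 * b)                                            (* step 1 *)
  + n * n                                                (* step 2 *)
  + n * (if send5 i is Some _ then n else 0)             (* step 5 *)
  + n * (if send6 i is Some _ then b else 0).            (* step 6 *)
Definition comm_cost : nat := n * B1 + \sum_(i in ~: Cr) honest_bits i.

End Protocol.

(* Main.v *)
Require Import Defs.
From mathcomp Require Import all_boot all_order all_algebra zify.
Set Implicit Arguments. Unset Strict Implicit. Unset Printing Implicit Defensive.

Lemma disj2 (T : finType) (a b c d : T) :
  [disjoint [set a; b] & [set c; d]] = [&& a != c, a != d, b != c & b != d].
Proof.
apply/idP/and4P.
- move=> H.
  have Ha := disjointFr H (_ : a \in [set a; b]).
  have Hb := disjointFr H (_ : b \in [set a; b]).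
  rewrite !inE in Ha Hb.
  rewrite eqxx orbT in Hb; rewrite eqxx in Ha; move: (Ha isT) (Hb isT).
  by case/norP=> ? ? /norP [? ?]; split; rewrite // eq_sym.
- case=> h1 h2 h3 h4; rewrite -setI_eq0; apply/eqP/setP=> x; rewrite !inE.
  apply/negbTE; apply/andP=> [[/orP[] /eqP-> /orP[] /eqP E]];
  by move: h1 h2 h3 h4; rewrite E eqxx.
Qed.

Section Matching.
Variable n : nat.
Implicit Types (E : rel 'I_n) (M : {set 'I_n * 'I_n}).

Definition incid (e : 'I_n * 'I_n) (v : 'I_n) := (e.1 == v) || (e.2 == v).

Definition matP E M :=
  (forall e, e \in M -> (nat_of_ord e.1 < nat_of_ord e.2)%N /\ E e.1 e.2) /\
  (forall e e' v, e \in M -> e' \in M -> incid e v -> incid e' v -> e = e').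

Lemma matchingP E M : is_matching E M <-> matP E M.
Proof.
rewrite /is_matching; split.
- case/andP=> /forallP H1 /forallP H2; split.
    by move=> e eM; move: (H1 e); rewrite eM /= => /andP.
  move=> e e' v eM e'M ie ie'; apply/eqP; apply/negPn/negP=> ne.
  move: (H2 e); rewrite eM /= => /forallP /(_ e'); rewrite e'M ne /= disj2.
  case/and4P; move: ie ie'; rewrite /incid.
  by case/orP=> /eqP-> /orP[] /eqP->; rewrite eqxx.
- case=> H1 H2; apply/andP; split.
    by apply/forallP=> e; apply/implyP=> eM; case: (H1 e eM)=> -> ->.
  apply/forallP=> e; apply/implyP=> eM; apply/forallP=> e'; apply/implyP=> e'M.
  apply/implyP=> ne; rewrite disj2; apply/and4P.
  have K: forall v, incid e v -> incid e' v -> False.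
    by move=> v a b; move/eqP: ne; apply; exact: H2 a b.
  split; apply/negP=> /eqP E1;
  [ apply: (K e.1) | apply: (K e.1) | apply: (K e.2) | apply: (K e.2) ];
  by rewrite /incid ?E1 eqxx ?orbT.
Qed.

Definition Nset M := [set x | [exists e in M, (e.1 == x) || (e.2 == x)]].

Lemma NsetP M x : reflect (exists2 e, e \in M & incid e x) (x \in Nset M).
Proof.
rewrite inE; apply: (iffP existsP).
  by case=> e /andP[eM ie]; exists e.
by case=> e eM ie; exists e; rewrite eM.
Qed.

Lemma notN M x e : x \notin Nset M -> e \in M -> incid e x = false.
Proof. move=> xN eM; apply/negP=> ie; case/negP: xN; apply/NsetP; by exists e. Qed.

Definition op (x y : 'I_n) := if (nat_of_ord x < nat_of_ord y)%N then (x, y) else (y, x).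

Lemma incid_op x y v : incid (op x y) v = (x == v) || (y == v).
Proof. by rewrite /op /incid; case: ifP => //= _; rewrite orbC. Qed.

Lemma op_lt x y : x != y -> (nat_of_ord (op x y).1 < nat_of_ord (op x y).2)%N.
Proof.
move=> ne; rewrite /op; case: ifP => //= /negbT; rewrite -leqNgt leq_eqVlt.
by case/orP=> // /eqP/val_inj E; rewrite E eqxx in ne.
Qed.

Lemma op_E E x y : E x y -> E y x -> E (op x y).1 (op x y).2.
Proof. by rewrite /op; case: ifP. Qed.

Lemma max_card E M M' : is_max_matching E M -> matP E M' -> #|M'| <= #|M|.
Proof. by case=> _ H /matchingP; apply: H. Qed.

Lemma aug1 E M x y : is_max_matching E M -> x \notin Nset M -> y \notin Nset M ->
  x != y -> E x y -> E y x -> False.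
Proof.
move=> Hmax xN yN ne Exy Eyx.
have Hm : matP E M by case: Hmax => /matchingP.
case: Hm => Hm1 Hm2.
have nin : op x y \notin M.
  by apply/negP=> iM; move: (notN xN iM); rewrite incid_op eqxx.
have: matP E (op x y |: M).
  split.
    move=> e; rewrite !inE; case/orP=> [/eqP->|]; last exact: Hm1.
    by split; [exact: op_lt | exact: op_E].
  move=> e e' v; rewrite !inE => /orP[/eqP->|eM] /orP[/eqP->|e'M] //; last exact: Hm2.
  + rewrite incid_op => /orP[] /eqP <- ie'; first by rewrite (notN xN e'M) in ie'.
    by rewrite (notN yN e'M) in ie'.
  + move=> ie; rewrite incid_op => /orP[] /eqP Ev; subst v;
    by [rewrite (notN xN eM) in ie | rewrite (notN yN eM) in ie].
move/(max_card Hmax); rewrite cardsU1 nin /=.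
by rewrite ltnn.
Qed.


Lemma uniqN E M e f v : matP E M -> e \in M -> f \in M -> incid e v -> incid f v -> f = e.
Proof. by case=> _ H eM fM ie iv; exact: (H f e v fM eM iv ie). Qed.

Lemma aug2 E M e x y : is_max_matching E M -> e \in M ->
  x \notin Nset M -> y \notin Nset M -> x != y ->
  E x e.1 -> E e.1 x -> E y e.2 -> E e.2 y -> False.
Proof.
move=> Hmax eM xN yN nexy E1 E1' E2 E2'.
have Hm : matP E M by case: Hmax => /matchingP.
have e12 : e.1 != e.2.
  by case: (proj1 Hm e eM) => lt _; apply/eqP=> Ee; rewrite Ee ltnn in lt.
have xe2 : x != e.2.
  by apply/eqP=> Ex; move: (notN xN eM); rewrite /incid Ex eqxx orbT.
have ye1 : y != e.1.
  by apply/eqP=> Ey; move: (notN yN eM); rewrite /incid Ey eqxx.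
have xe1 : x != e.1.
  by apply/eqP=> Ex; move: (notN xN eM); rewrite /incid Ex eqxx.
have ye2 : y != e.2.
  by apply/eqP=> Ey; move: (notN yN eM); rewrite /incid Ey eqxx orbT.
set A := op x e.1; set B := op y e.2.
have BnM : B \notin M :\ e.
  by apply/negP; rewrite inE => /andP[_ BM]; move: (notN yN BM); rewrite incid_op eqxx.
have AnB : A != B.
  apply/eqP=> AB; have: incid A x by rewrite incid_op eqxx.
  by rewrite AB incid_op eq_sym (negbTE nexy) eq_sym (negbTE xe2).
have AnM : A \notin B |: M :\ e.
  rewrite !inE negb_or AnB /=; apply/negP=> /andP[_ AM].
  by move: (notN xN AM); rewrite incid_op eqxx.
have : matP E (A |: (B |: M :\ e)).
  split.
    move=> f; rewrite !inE => /orP[/eqP->|/orP[/eqP->|/andP[_ fM]]].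
    - by split; [exact: op_lt xe1 | exact: op_E E1 E1'].
    - by split; [exact: op_lt ye2 | exact: op_E E2 E2'].
    - exact: (proj1 Hm).
  have K : forall f f' v, f \in A |: (B |: M :\ e) -> f' \in A |: (B |: M :\ e) ->
     f != f' -> incid f v -> incid f' v -> f = A -> False.
    move=> f f' v _; rewrite !inE => /orP[/eqP->|/orP[/eqP->|/andP[f'e f'M]]] ne iv iv' fA;
      subst f; first by rewrite eqxx in ne.
      move: iv iv'; rewrite !incid_op => /orP[] /eqP <- /orP[] /eqP E0;
      by move: nexy xe2 ye1 e12; rewrite ?E0 ?eqxx.
    move: iv; rewrite incid_op => /orP[] /eqP Ev; subst v.
      by rewrite (notN xN f'M) in iv'.
    by move: f'e; rewrite (uniqN Hm eM f'M (_ : incid e e.1) iv') ?eqxx // /incid eqxx.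
  have K' : forall f f' v, f \in A |: (B |: M :\ e) -> f' \in A |: (B |: M :\ e) ->
     f != f' -> incid f v -> incid f' v -> f = B -> False.
    move=> f f' v _; rewrite !inE => /orP[/eqP->|/orP[/eqP->|/andP[f'e f'M]]] ne iv iv' fA;
      subst f; last 2 first.
      by rewrite eqxx in ne.
      move: iv; rewrite incid_op => /orP[] /eqP Ev; subst v.
        by rewrite (notN yN f'M) in iv'.
      by move: f'e; rewrite (uniqN Hm eM f'M (_ : incid e e.2) iv') ?eqxx // /incid eqxx orbT.
    move: iv iv'; rewrite !incid_op => /orP[] /eqP <- /orP[] /eqP E0;
    by move: nexy xe2 ye1 e12; rewrite ?E0 ?eqxx // eq_sym ?E0 ?eqxx.
  move=> f f' v fM f'M iv iv'; apply/eqP/negPn/negP => ne.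
  move: (fM) (f'M); rewrite !inE => /orP[/eqP fA|/orP[/eqP fB|/andP[fe fM']]]
    /orP[/eqP f'A|/orP[/eqP f'B|/andP[f'e f'M']]].
  all: try by [apply: (K f f' v) | apply: (K' f f' v)
        | apply: (K f' f v) => //; rewrite eq_sym | apply: (K' f' f v) => //; rewrite eq_sym].
  by move: ne; rewrite (uniqN Hm f'M' fM' iv' iv) eqxx.
move/(max_card Hmax); rewrite cardsU1 AnM cardsU1 BnM /=.
rewrite [X in _ <= X](cardsD1 e M) eM /=.
by rewrite ?add1n ?ltnS ltnn.
Qed.


Lemma N_card E M : matP E M -> 2 * #|M| <= #|Nset M|.
Proof.
case=> H1 H2.
set A1 := [set e.1 | e in M]; set A2 := [set e.2 | e in M].
have c1 : #|A1| = #|M|.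
  apply: card_in_imset => e e' eM e'M E12; apply: (H2 e e' e.1) => //.
    by rewrite /incid eqxx.
  by rewrite /incid E12 eqxx.
have c2 : #|A2| = #|M|.
  apply: card_in_imset => e e' eM e'M E12; apply: (H2 e e' e.2) => //.
    by rewrite /incid eqxx orbT.
  by rewrite /incid E12 eqxx orbT.
have d : A1 :&: A2 = set0.
  apply/setP=> v; rewrite !inE; apply/negbTE/andP=> [[/imsetP[e eM ->] /imsetP[e' e'M E12]]].
  have ee : e = e'.
    by apply: (H2 e e' e.1) => //; rewrite /incid ?E12 eqxx ?orbT.
  subst e'; case: (H1 e eM) => lt _; by rewrite E12 ltnn in lt.
have sub : A1 :|: A2 \subset Nset M.
  apply/subsetP=> v; rewrite !inE => /orP[] /imsetP[e eM ->]; apply/existsP; exists e;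
  by rewrite eM eqxx ?orbT.
move: (subset_leq_card sub); rewrite cardsU d cards0 subn0 c1 c2.
by rewrite mul2n -addnn.
Qed.

Lemma predle k a : k.+1 <= a -> k <= a - 1.
Proof. lia. Qed.

Lemma setD1D (X Z : {set 'I_n}) x : (X :\ x) :\: Z = (X :\: Z) :\ x.
Proof. by apply/setP=> v; rewrite !inE; case: (v == x); case: (v \in Z). Qed.

Lemma cardD1in (S : {set 'I_n}) x : x \in S -> #|S :\ x| = #|S| - 1.
Proof. by move=> xS; rewrite [#|S|](cardsD1 x) xS add1n subn1. Qed.

Lemma cardD1out (S : {set 'I_n}) x : x \notin S -> S :\ x = S.
Proof. by move=> xS; apply/setP=> v; rewrite !inE; case: eqP => // ->; rewrite (negbTE xS). Qed.

Lemma build E (Z : {set 'I_n}) k : forall (X Y : {set 'I_n}),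
  [disjoint X & Y] ->
  (forall p q, p \in X -> q \in Y -> ~~ ((p \in Z) && (q \in Z)) -> E p q && E q p) ->
  k <= #|X| -> k <= #|Y| -> k <= #|X :\: Z| + #|Y :\: Z| ->
  exists M, [/\ matP E M, #|M| = k & (forall e v, e \in M -> incid e v -> v \in X :|: Y)].
Proof.
elim: k => [|k IH] X Y dXY HE kX kY kZ.
  exists set0; split; rewrite ?cards0 //.
    by split=> e; rewrite inE.
  by move=> e v; rewrite inE.
have step : forall x y, x \in X -> y \in Y -> ~~ ((x \in Z) && (y \in Z)) ->
   k <= #|(X :\ x) :\: Z| + #|(Y :\ y) :\: Z| ->
   exists M, [/\ matP E M, #|M| = k.+1 & (forall e v, e \in M -> incid e v -> v \in X :|: Y)].
  move=> x y xX yY xyZ kZ'.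
  have xY : x \notin Y by apply/negP=> xY; move: (disjointFr dXY xX); rewrite xY.
  have yX : y \notin X by apply/negP=> yX; move: (disjointFr dXY yX); rewrite yY.
  have nexy : x != y by apply/eqP=> exy; move: xY; rewrite exy yY.
  have h1 : [disjoint X :\ x & Y :\ y].
    exact: (disjointWl (subD1set X x) (disjointWr (subD1set Y y) dXY)).
  have h2 : forall p q, p \in X :\ x -> q \in Y :\ y -> ~~ ((p \in Z) && (q \in Z)) -> E p q && E q p.
    by move=> p q; rewrite !inE => /andP[_ pX] /andP[_ qY]; exact: HE.
  have h3 : k <= #|X :\ x|.
    by rewrite cardD1in //; apply: predle.
  have h4 : k <= #|Y :\ y|.
    by rewrite cardD1in //; apply: predle.
  have [M0 [[M01 M02] cM0 vM0]] := IH (X :\ x) (Y :\ y) h1 h2 h3 h4 kZ'.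
  have nM0 : forall e, e \in M0 -> incid e x = false /\ incid e y = false.
    move=> e eM; split; apply/negP=> ie; move: (vM0 e _ eM ie); rewrite !inE eqxx /=.
      by rewrite (negbTE xY) andbF.
    by rewrite (negbTE yX) andbF.
  have nin : op x y \notin M0.
    by apply/negP=> iM; move: (nM0 _ iM) => [+ _]; rewrite incid_op eqxx.
  have /andP[Exy Eyx] := HE x y xX yY xyZ.
  exists (op x y |: M0); split.
  - split.
      move=> e; rewrite !inE => /orP[/eqP->|eM]; last exact: M01.
      by split; [exact: op_lt | exact: op_E].
    move=> e e' v; rewrite !inE => /orP[/eqP->|eM] /orP[/eqP->|e'M] //; last exact: M02.
    + rewrite incid_op => /orP[] /eqP <- ie'; move: (nM0 _ e'M) => [g1 g2].
        by rewrite g1 in ie'.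
      by rewrite g2 in ie'.
    + move=> ie; rewrite incid_op => /orP[] /eqP Ev; subst v; move: (nM0 _ eM) => [g1 g2].
        by rewrite g1 in ie.
      by rewrite g2 in ie.
  - by rewrite cardsU1 nin cM0.
  - move=> e v; rewrite !inE => /orP[/eqP->|eM].
      by rewrite incid_op => /orP[] /eqP <-; rewrite ?xX ?yY ?orbT.
    move=> ie; move: (vM0 e v eM ie); rewrite !inE.
    by case/orP=> /andP[_ ->]; rewrite ?orbT.
case: (pickP (mem (X :\: Z))) => [x xXZ | noX].
- have xX : x \in X by move: xXZ; rewrite /= !inE; case/andP.
  have xZ : x \notin Z by move: xXZ; rewrite /= !inE; case/andP.
  case: (pickP (mem (Y :&: Z))) => [y yYZ | noY].
    have /andP[yZ yY] : (y \in Z) && (y \in Y) by move: yYZ; rewrite /= !inE andbC.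
    apply: (step x y xX yY); first by rewrite (negbTE xZ).
    rewrite setD1D cardD1in // setD1D cardD1out; last by rewrite inE yZ.
    have : 0 < #|X :\: Z| by apply/card_gt0P; exists x.
    by move: kZ; move: (#|X :\: Z|) (#|Y :\: Z|) => a c; lia.
  have [y yY] : exists y, y \in Y by apply/card_gt0P; apply: leq_trans kY.
  have yZ : y \notin Z by apply/negP=> yZ; move: (noY y); rewrite /= inE yZ yY.
  apply: (step x y xX yY); first by rewrite (negbTE xZ).
  have -> : (Y :\ y) :\: Z = Y :\ y.
    apply/setP=> v; rewrite !inE; case: (boolP (v \in Z)) => // vZ /=.
    by apply/esym/negbTE/andP=> [[_ vY]]; move: (noY v); rewrite /= inE vZ vY.
  rewrite cardD1in //; move: kY; move: (#|Y|) (#|(X :\ x) :\: Z|) => a c; lia.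
- have [x xX] : exists x, x \in X by apply/card_gt0P; apply: leq_trans kX.
  have XZ0 : #|X :\: Z| = 0 by apply: eq_card0 => v; exact: noX.
  have [y yYZ] : exists y, y \in Y :\: Z.
    by apply/card_gt0P; move: kZ; rewrite XZ0 add0n; apply: leq_trans.
  have yY : y \in Y by move: yYZ; rewrite /= !inE; case/andP.
  have yZ : y \notin Z by move: yYZ; rewrite /= !inE; case/andP.
  apply: (step x y xX yY); first by rewrite (negbTE yZ) andbF.
  rewrite [_ :\: Z]setD1D cardD1out; last first.
    by apply/negP=> h; move: (noX x); rewrite /= h.
  rewrite XZ0 add0n setD1D cardD1in //.
  by move: kZ; rewrite XZ0 add0n; move: (#|Y :\: Z|) => a; lia.
Qed.

End Matching.

Section Star.
Variable n : nat.
Variable mm : rel 'I_n -> {set 'I_n * 'I_n}.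
Hypothesis Hmm : forall E, is_max_matching E (mm E).
Variable G : rel 'I_n.
Hypothesis Grefl : forall x, G x x.
Hypothesis Gsym : forall x y, G x y = G y x.

Definition Eb := fun x y => ~~ G x y.
Definition sM := mm Eb.
Definition sN := Nset sM.
Definition sT := [set x in ~: sN | [exists e in sM, Eb x e.1 && Eb x e.2]].
Definition sC := ~: sN :\: sT.
Definition sB := [set j in sN | [exists k in sC, Eb j k]].
Definition sD := ~: sB.

Lemma STAR_eq : STAR mm G =
  if (n - 2 * tB n <= #|sC|) && (n - tB n <= #|sD|) then Some (sC, sD) else None.
Proof. by []. Qed.

Lemma Ebsym x y : Eb x y = Eb y x.
Proof. by rewrite /Eb Gsym. Qed.

Lemma sMmax : is_max_matching Eb sM.
Proof. exact: Hmm. Qed.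

Lemma sMmat : matP Eb sM.
Proof. by case: sMmax => /matchingP. Qed.

Lemma edgeE e : e \in sM -> Eb e.1 e.2 /\ Eb e.2 e.1.
Proof. by move=> eM; case: (proj1 sMmat e eM) => _ h; split; rewrite // Ebsym. Qed.

Lemma edge_ne e : e \in sM -> e.1 != e.2.
Proof.
by move=> eM; case: (proj1 sMmat e eM) => lt _; apply/eqP=> E; rewrite E ltnn in lt.
Qed.

Lemma star_CD c d : c \in sC -> d \in sD -> G c d.
Proof.
move=> cC; rewrite /sD /sB in_setC in_set negb_and.
have cN : c \notin sN by move: cC; rewrite /sC !inE => /andP[_].
case: (boolP (d \in sN)) => /= [dN nk | dN _].
  rewrite Gsym; apply/negPn/negP=> Edc; case/negP: nk; apply/existsP; exists c.
  by rewrite cC.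
case: (eqVneq c d) => [->|ne]; first exact: Grefl.
apply/negPn/negP=> Ecd.
apply: (aug1 sMmax cN dN ne Ecd); by rewrite Ebsym.
Qed.

Lemma star_Csize : #|sC| + 2 * #|sM| <= n.
Proof.
have h1 : #|sC| <= #|~: sN| by apply: subset_leq_card; apply/subsetP=> v; rewrite /sC !inE => /andP[].
have h2 := N_card sMmat.
have h0 := cardsC sN; rewrite card_ord in h0.
move: h0 h1 h2; move: (#|sC|) (#|sM|) (#|sN|) (#|~: sN|) => a b c d; lia.
Qed.


Lemma incid2 (e : 'I_n * 'I_n) a b : incid e a -> incid e b -> a != b ->
  (e.1 = a /\ e.2 = b) \/ (e.1 = b /\ e.2 = a).
Proof.
rewrite /incid => /orP[] /eqP <- /orP[] /eqP <-; rewrite ?eqxx //; by [left | right].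
Qed.

Lemma incid3 (e : 'I_n * 'I_n) a b c : incid e a -> incid e b -> incid e c ->
  a != c -> b != c -> a = b.
Proof.
rewrite /incid => /orP[] /eqP <- /orP[] /eqP <- /orP[] /eqP <-; rewrite ?eqxx //.
Qed.

Definition partner v :=
  if [pick e in sM | incid e v] is Some e then (if e.1 == v then e.2 else e.1) else v.

Lemma partnerP v : v \in sN -> exists e,
  [/\ e \in sM, incid e v, incid e (partner v), partner v != v & Eb v (partner v)].
Proof.
move=> vN; rewrite /partner; case: pickP => [e /andP[eM ie] | none]; last first.
  by case/NsetP: vN => e eM ie; move: (none e); rewrite /= eM ie.
exists e; have [E1 E2] := edgeE eM; have ne := edge_ne eM.
move: ie; rewrite /incid; case: (eqVneq e.1 v) => [<-|ne1] /= ie.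
  by rewrite eqxx orbT eq_sym ne.
move/eqP: ie => Ev; subst v; rewrite (negbTE ne1); split; rewrite /incid ?eqxx ?orbT //.
Qed.

Definition tmap v :=
  if [pick e in sM | Eb v e.1 && Eb v e.2] is Some e then e.1 else v.

Lemma tmapP v : v \in sT -> exists e, [/\ e \in sM, Eb v e.1, Eb v e.2 & tmap v = e.1].
Proof.
rewrite /sT inE => /andP[_ /existsP[e0 /andP[e0M h0]]].
rewrite /tmap; case: pickP => [e /andP[eM /andP[h1 h2]] | none].
  by exists e.
by move: (none e0); rewrite /= e0M h0.
Qed.

Lemma sT_N v : v \in sT -> v \notin sN.
Proof. by rewrite /sT !inE => /andP[]. Qed.

Variable H : {set 'I_n}.
Hypothesis Hcl : forall x y, x \in H -> y \in H -> G x y.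

Lemma EbH x y : x \in H -> Eb x y -> y \notin H.
Proof. by move=> xH Exy; apply/negP=> yH; move: Exy; rewrite /Eb Hcl. Qed.

Definition fmap v := if v \in sN then partner v else tmap v.

Lemma fmap_out v : v \in (H :&: sN) :|: (H :&: sT) -> fmap v \notin H.
Proof.
rewrite /fmap in_setU !in_setI => /orP[] /andP[vH vX].
  by rewrite vX; case: (partnerP vX) => e [_ _ _ _ E]; exact: EbH E.
rewrite (negbTE (sT_N vX)); case: (tmapP vX) => e [_ E1 _ ->]; exact: EbH E1.
Qed.

Lemma mixed v1 v2 : v1 \in H -> v1 \in sN -> v2 \in H -> v2 \in sT ->
  partner v1 = tmap v2 -> False.
Proof.
move=> v1H v1N v2H v2T Ep.
case: (partnerP v1N) => e1 [e1M i1 i1p _ _].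
case: (tmapP v2T) => e2 [e2M E1 E2 Et].
have ee : e1 = e2.
  apply: (uniqN sMmat e2M e1M (_ : incid e2 (partner v1)) i1p).
  by rewrite Ep Et /incid eqxx.
subst e1; move: i1; rewrite /incid => /orP[] /eqP Ev.
  by move: (EbH v2H E1); rewrite Ev v1H.
by move: (EbH v2H E2); rewrite Ev v1H.
Qed.

Lemma fmap_inj : {in (H :&: sN) :|: (H :&: sT) &, injective fmap}.
Proof.
move=> v1 v2; rewrite !in_setU !in_setI /fmap.
case/orP=> /andP[v1H v1X]; case/orP=> /andP[v2H v2X].
- rewrite v1X v2X => Ep.
  case: (partnerP v1X) => e1 [e1M i1 i1p ne1 _].
  case: (partnerP v2X) => e2 [e2M i2 i2p ne2 _].
  have ee : e1 = e2 by apply: (uniqN sMmat e2M e1M (_ : incid e2 (partner v1)) i1p); rewrite Ep.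
  subst e1; apply: (incid3 i1 i2 i1p); [by rewrite eq_sym | by rewrite Ep eq_sym].
- rewrite v1X (negbTE (sT_N v2X)) => Ep; by case: (mixed v1H v1X v2H v2X Ep).
- rewrite v2X (negbTE (sT_N v1X)) => Ep; by case: (mixed v2H v2X v1H v1X (esym Ep)).
- rewrite (negbTE (sT_N v1X)) (negbTE (sT_N v2X)) => Ep.
  case: (tmapP v1X) => e1 [e1M E11 E12 Et1].
  case: (tmapP v2X) => e2 [e2M E21 E22 Et2].
  have ee : e1 = e2.
    by apply: (uniqN sMmat e2M e1M (_ : incid e2 e1.1)); rewrite /incid -?Et1 ?Ep Et2 eqxx.
  subst e1; apply/eqP/negPn/negP => ne.
  apply: (aug2 sMmax e2M (sT_N v1X) (sT_N v2X) ne E11 _ E22 _); by rewrite Ebsym.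
Qed.

Lemma star_C : #|H| - #|~: H| <= #|sC :&: H|.
Proof.
set D0 := (H :&: sN) :|: (H :&: sT).
have h1 : #|D0| <= #|~: H|.
  rewrite -(card_in_imset fmap_inj); apply: subset_leq_card; apply/subsetP=> w.
  by case/imsetP=> v vD ->; rewrite in_setC; exact: fmap_out.
have h2 : sC :&: H = H :\: D0.
  apply/setP=> v; rewrite /sC /D0 !(in_setI, in_setD, in_setC, in_setU).
  by case: (v \in H); case: (v \in sN); case: (v \in sT).
have h3 : #|H :\: D0| = #|H| - #|D0|.
  rewrite cardsD (setIidPr _) //; apply/subsetP=> v; rewrite /D0 in_setU !in_setI.
  by case/orP=> /andP[].
rewrite h2 h3; move: h1; move: (#|H|) (#|D0|) (#|~: H|) => a b c; lia.
Qed.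

Definition gmap v := if v \in H then partner v else v.

Lemma sBP j : j \in sB -> j \in sN /\ exists2 k, k \in sC & Eb j k.
Proof. by rewrite /sB inE => /andP[jN /existsP[k /andP[kC E]]]; split; last exists k. Qed.

Lemma mixedB j1 j2 : j1 \in H -> j1 \in sB -> j2 \in sB -> partner j1 = j2 -> False.
Proof.
move=> j1H j1B j2B Ep.
case: (sBP j1B) => j1N [k1 k1C Ek1]; case: (sBP j2B) => _ [k2 k2C Ek2].
case: (partnerP j1N) => e [eM i1 i2 ne _]; rewrite Ep in i2 ne.
have ne' : j1 != j2 by rewrite eq_sym.
have k1N : k1 \notin sN by move: k1C; rewrite /sC in_setD in_setC; case/andP.
have k2N : k2 \notin sN by move: k2C; rewrite /sC in_setD in_setC; case/andP.
have k1T : k1 \notin sT by move: k1C; rewrite /sC in_setD in_setC; case/andP.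
case: (eqVneq k1 k2) => [ek|nek].
  subst k2; case/negP: k1T; rewrite /sT in_set in_setC k1N andTb; apply/existsP; exists e.
  rewrite eM andTb; case: (incid2 i1 i2 ne') => [[-> ->]|[-> ->]];
  by rewrite !(Ebsym k1) Ek1 Ek2.
case: (incid2 i1 i2 ne') => [[E1 E2]|[E1 E2]].
  apply: (aug2 sMmax eM k1N k2N nek); rewrite ?E1 ?E2 //; by rewrite Ebsym.
have nek' : k2 != k1 by rewrite eq_sym.
apply: (aug2 sMmax eM k2N k1N nek'); rewrite ?E1 ?E2 //; by rewrite Ebsym.
Qed.

Lemma star_B : #|sB| <= #|~: H|.
Proof.
have inj : {in sB &, injective gmap}.
  move=> j1 j2 j1B j2B; rewrite /gmap.
  case: (boolP (j1 \in H)) => j1H; case: (boolP (j2 \in H)) => j2H //.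
  - move=> Ep; case: (sBP j1B) => j1N _; case: (sBP j2B) => j2N _.
    case: (partnerP j1N) => e1 [e1M i1 i1p ne1 _].
    case: (partnerP j2N) => e2 [e2M i2 i2p ne2 _].
    have ee : e1 = e2 by apply: (uniqN sMmat e2M e1M (_ : incid e2 (partner j1)) i1p); rewrite Ep.
    subst e1; apply: (incid3 i1 i2 i1p); [by rewrite eq_sym | by rewrite Ep eq_sym].
  - by move=> Ep; case: (mixedB j1H j1B j2B Ep).
  - by move=> Ep; case: (mixedB j2H j2B j1B (esym Ep)).
rewrite -(card_in_imset inj); apply: subset_leq_card; apply/subsetP=> w.
case/imsetP=> j jB ->; rewrite inE /gmap; case: (boolP (j \in H)) => // jH.
case: (sBP jB) => jN _; case: (partnerP jN) => e [_ _ _ _ E]; exact: EbH E.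
Qed.

End Star.

Lemma tB_lt n : 0 < n -> (tB n).+1 <= n.
Proof. by case: n => // m _; rewrite /tB /= ltnS leq_div. Qed.

Lemma tB_spec n : 0 < n -> 3 * tB n + 1 <= n /\ n <= 3 * tB n + 3.
Proof.
move=> n0; rewrite /tB.
have h1 := divn_eq n.-1 3; have h2 := ltn_pmod n.-1 (isT : 0 < 3).
move: h1 h2; move: (n.-1 %/ 3) (n.-1 %% 3) => a b; move: n0; case: n => // m _ /=.
lia.
Qed.

Section RS.
Import GRing.Theory.
Variable n : nat.
Variable F : finFieldType.
Variable alpha : 'I_n -> F.
Hypothesis alpha_inj : injective alpha.

Lemma ENC_agree (d1 d2 : {ffun 'I_(tB n).+1 -> F}) :
  (tB n).+1 <= #|[set j | ENC alpha d1 j == ENC alpha d2 j]| -> d1 = d2.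
Proof.
set t := tB n => Hc.
set q := (\poly_(i < t.+1) (d1 (inord i) - d2 (inord i)))%R.
have Hq : forall x, (q.[x] = \sum_(k < t.+1) d1 k * x ^+ k - \sum_(k < t.+1) d2 k * x ^+ k)%R.
  move=> x; rewrite horner_poly -sumrB; apply: eq_bigr => k _.
  by rewrite inord_val mulrBl.
set S := [set j | ENC alpha d1 j == ENC alpha d2 j].
set rs := map alpha (enum S).
have q0 : q = 0%R.
  apply/eqP/negPn/negP => nz.
  have := @max_poly_roots _ q rs nz.
  have -> : all (root q) rs.
    apply/allP=> y /mapP [j]; rewrite mem_enum inE !ffunE => /eqP Ej ->.
    by rewrite /root Hq Ej subrr.
  rewrite map_inj_uniq // enum_uniq size_map -cardE.
  move=> /(_ isT isT) /leq_trans /(_ (size_poly _ _)).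
  by rewrite ltnNge Hc.
apply/ffunP => k; apply/eqP; rewrite -subr_eq0.
have := congr1 (fun p : {poly F} => (p`_k)%R) q0; rewrite coef_poly ltn_ord coef0 inord_val.
by move=> ->.
Qed.

Lemma ENC_inj : 0 < n -> injective (ENC alpha).
Proof.
move=> n0 d1 d2 E; apply: ENC_agree.
apply: leq_trans (_ : n <= _); first exact: tB_lt.
rewrite -{1}[n]card_ord; apply: subset_leq_card; apply/subsetP=> j _; by rewrite inE E.
Qed.

End RS.

Lemma ar1 t n : 3 * t + 1 <= n -> t < n - 2 * t.
Proof. lia. Qed.
Lemma ar2 t n c d : 3 * t + 1 <= n -> c <= t -> n - t <= d -> t < d - c.
Proof. lia. Qed.
Lemma ar3 t n a k : a + 2 * k <= n -> n - 2 * t <= a -> k <= t.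
Proof. lia. Qed.
Lemma ar4 t c s : c <= t -> (2 * t).+1 <= s -> t < s - c.
Proof. lia. Qed.
Lemma ar5 t c s : c <= t -> t < s -> c < s.
Proof. lia. Qed.

Lemma cardD2 (T : finType) (X Y Z : {set T}) : [disjoint X & Y] ->
  #|X| + #|Y| - #|Z| <= #|X :\: Z| + #|Y :\: Z|.
Proof.
move=> dXY.
have h1 := cardsD X Z; have h2 := cardsD Y Z.
have h0 : (X :&: Z) :&: (Y :&: Z) = set0.
  apply/setP=> v; rewrite !in_setI in_set0; apply/negbTE; apply/negP=> /andP[/andP[vX _] /andP[vY _]].
  by move: (disjointFr dXY vX); rewrite vY.
have h3 : #|X :&: Z| + #|Y :&: Z| <= #|Z|.
  have := cardsU (X :&: Z) (Y :&: Z); rewrite h0 cards0 subn0 => <-.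
  by apply: subset_leq_card; apply/subsetP=> v; rewrite in_setU !in_setI; case/orP=> /andP[].
have h4 : #|X :&: Z| <= #|X| by apply: subset_leq_card; apply: subsetIl.
have h5 : #|Y :&: Z| <= #|Y| by apply: subset_leq_card; apply: subsetIl.
move: h1 h2 h3 h4 h5; move: #|X :\: Z| #|Y :\: Z| #|X :&: Z| #|Y :&: Z| #|X| #|Y| #|Z|.
move=> a1 a2 a3 a4 a5 a6 a7; lia.
Qed.

Lemma ar6 t a c z : t < a -> t < c -> z <= t -> t.+1 <= a + c - z.
Proof. lia. Qed.

Lemma ar7 a c t : c <= t -> (2 * t).+1 <= a -> (a + 2) %/ 2 <= a - c.
Proof. move=> h1 h2; rewrite -ltnS ltn_divLR //; lia. Qed.

Lemma ar8 a s1 s2 : (a + 2) %/ 2 <= s1 -> (a + 2) %/ 2 <= s2 -> s1 + s2 <= a -> False.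
Proof.
have := divn_eq (a + 2) 2; have := ltn_pmod (a + 2) (isT : 0 < 2).
move: ((a + 2) %/ 2) ((a + 2) %% 2) => q r; lia.
Qed.

Lemma ar9 n t s1 s2 u : 3 * t + 1 <= n -> s1 <= t -> s2 <= t -> n - (s1 + s2) <= u -> t < u.
Proof. lia. Qed.

Lemma card_disjU (T : finType) (S1 S2 E : {set T}) :
  S1 :&: S2 = set0 -> S1 :|: S2 \subset E -> #|S1| + #|S2| <= #|E|.
Proof.
move=> h0 sub; have := cardsU S1 S2; rewrite h0 cards0 subn0 => <-.
exact: subset_leq_card.
Qed.

Lemma ar10 n c t y : c <= t -> n - c - c <= y -> n - 2 * t <= y.
Proof. lia. Qed.
Lemma ar11 n c t y : c <= t -> 3 * t + 1 <= n -> n - c - c <= y -> t < y.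
Proof. lia. Qed.
Lemma ar12 n c t : c <= t -> 3 * t + 1 <= n -> 2 * t < n - c.
Proof. lia. Qed.
Lemma ar14 n a c k t : a + c = n -> a <= k -> k <= t -> n - t <= c.
Proof. lia. Qed.

Lemma ar15 a c n : a + c = n -> c = n - a.
Proof. by move=> <-; rewrite addKn. Qed.

Section Proto.
Variables (n b : nat) (F : finFieldType) (alpha : 'I_n -> F)
  (rep : F -> b.-tuple bool) (unrep : b.-tuple bool -> F)
  (mdef : ((tB n).+1 * b).-tuple bool) (mm : rel 'I_n -> {set 'I_n * 'I_n}).
Hypotheses (alpha_inj : injective alpha) (repK : cancel rep unrep)
  (unrepK : cancel unrep rep) (Hmm : forall E, is_max_matching E (mm E)).
Variables (m : 'I_n -> ((tB n).+1 * b).-tuple bool) (Cr : {set 'I_n}) (A : adversary n F).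
Hypothesis HCr : #|Cr| <= tB n.

Local Notation t := (tB n).
Local Notation sh := (share alpha unrep m).
Local Notation adjx := (adj alpha unrep m Cr A).
Local Notation Ecalx := (Ecal alpha unrep mm m Cr A).

Lemma adj_refl x y : adjx x y y.
Proof. by rewrite /adj eqxx. Qed.

Lemma adj_sym x y z : adjx x y z = adjx x z y.
Proof. by rewrite /adj eq_sym andbC. Qed.

Lemma vecE i j : vec alpha unrep m Cr A i j =
  (sh i j == rd alpha unrep m Cr A i j) && (sh i i == rs alpha unrep m Cr A i j).
Proof. by rewrite /vec ffunE. Qed.

Lemma adj_share x y z : y \notin Cr -> z \notin Cr -> adjx x y z ->
  sh y z = sh z z /\ sh z y = sh y y.
Proof.
move=> yC zC; rewrite /adj; case: eqVneq => [<- _ //|ne] /= /andP[h1 h2].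
move: h1 h2; rewrite /recv2 (negbTE yC) (negbTE zC) !vecE /rd /rs /recv1.
rewrite (negbTE yC) (negbTE zC) /= => /andP[/eqP -> _] /andP[/eqP -> _]; by [].
Qed.

Lemma adj_of_share x y z : y \notin Cr -> z \notin Cr -> sh y = sh z -> adjx x y z.
Proof.
move=> yC zC E; rewrite /adj; apply/orP; right.
rewrite /recv2 (negbTE yC) (negbTE zC) !vecE /rd /rs /recv1.
by rewrite (negbTE yC) (negbTE zC) /= E !eqxx.
Qed.

Lemma hcount (S : {set 'I_n}) : #|S| - #|Cr| <= #|S :\: Cr|.
Proof.
rewrite cardsD; apply: leq_sub2l; apply: subset_leq_card; exact: subsetIr.
Qed.

Lemma exists_honest (S : {set 'I_n}) : #|Cr| < #|S| -> exists2 v, v \in S & v \notin Cr.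
Proof.
move=> lt; have : 0 < #|S :\: Cr|.
  by apply: leq_trans (hcount S); rewrite subn_gt0.
by case/card_gt0P=> v; rewrite inE => /andP[vC vS]; exists v.
Qed.

Lemma share_agree y z : t.+1 <= #|[set j | sh y j == sh z j]| -> sh y = sh z.
Proof. by move/(ENC_agree alpha_inj); rewrite /share => ->. Qed.

Definition FsD x (C : {set 'I_n}) := [set y | t.+1 <= #|[set z in C | adjx x y z]|].
Definition EsD x C := [set y | (2 * t).+1 <= #|[set z in FsD x C | adjx x y z]|].

Lemma EcalP x : Ecalx x != set0 ->
  [/\ n - 2 * t <= #|sC mm (adjx x)|, n - t <= #|sD mm (adjx x)|,
      (2 * t).+1 <= #|FsD x (sC mm (adjx x))|,
      (2 * t).+1 <= #|EsD x (sC mm (adjx x))|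
    & Ecalx x = EsD x (sC mm (adjx x))].
Proof.
rewrite /Ecal STAR_eq; case: ifP => [/andP[h1 h2]|]; last by rewrite eqxx.
by case: ifP => [/andP[h3 h4] _|]; last by rewrite eqxx.
Qed.

Lemma view x : x \notin Cr -> Ecalx x != set0 -> exists c0,
  [/\ c0 \notin Cr, (forall e, e \in Ecalx x -> e \notin Cr -> sh e = sh c0),
      (2 * t).+1 <= #|Ecalx x| & (forall M', matP (Eb (adjx x)) M' -> #|M'| <= t)].
Proof.
move=> xC ne.
have n0 : 0 < n := leq_ltn_trans (leq0n x) (ltn_ord x).
have [h3 _] := tB_spec n0.
case: (EcalP ne) => hC hD hF hE Ee.
set G := adjx x in hC hD hF hE Ee *.
set C := sC mm G in hC hF hE Ee *.
set D := sD mm G in hD.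
have CD : forall c d, c \in C -> d \in D -> G c d := star_CD Hmm (adj_refl x) (adj_sym x).
have [c0 c0C c0H] : exists2 c0, c0 \in C & c0 \notin Cr.
  by apply: exists_honest; apply: leq_ltn_trans HCr _; apply: leq_trans hC; exact: ar1.
have Cshare : forall c, c \in C -> c \notin Cr -> sh c = sh c0.
  move=> c cC cH; apply: share_agree.
  have := leq_trans (ar2 h3 HCr hD) (hcount D).
  move/leq_trans; apply; apply: subset_leq_card; apply/subsetP => d; rewrite in_setD => /andP[dH dD].
  have [e1 _] := adj_share cH dH (CD c d cC dD).
  have [e2 _] := adj_share c0H dH (CD c0 d c0C dD).
  by rewrite in_set e1 e2.
have Fshare : forall f, f \in FsD x C -> f \notin Cr -> sh f f = sh c0 f.
  move=> f; rewrite in_set => hf fH.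
  have [c] : exists2 c, c \in [set z in C | G f z] & c \notin Cr.
    by apply: exists_honest; exact: ar5 HCr hf.
  rewrite in_set => /andP[cC Efc] cH.
  have [_ e] := adj_share fH cH Efc.
  by rewrite -e Cshare.
exists c0; split => //.
- move=> e; rewrite Ee in_set => he eH; apply: share_agree.
  have := leq_trans (ar4 HCr he) (hcount _).
  move/leq_trans; apply; apply: subset_leq_card; apply/subsetP => z.
  rewrite in_setD in_set => /andP[zH /andP[zF Eez]].
  have [e1 _] := adj_share eH zH Eez.
  by rewrite in_set e1 Fshare.
- by rewrite Ee.
- move=> M' HM'; apply: leq_trans (max_card (sMmax Hmm G) HM') _.
  exact: ar3 (star_Csize Hmm G) hC.
Qed.

Lemma cross x cx cy : (forall M', matP (Eb (adjx x)) M' -> #|M'| <= t) ->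
  forall Ex Ey : {set 'I_n},
  (forall e, e \in Ex -> e \notin Cr -> sh e = sh cx) ->
  (forall e, e \in Ey -> e \notin Cr -> sh e = sh cy) ->
  (2 * t).+1 <= #|Ex| -> (2 * t).+1 <= #|Ey| -> sh cx = sh cy.
Proof.
move=> Hb Ex Ey HEx HEy hx hy.
apply/eqP/negPn/negP => neq.
set SP := Ex :\: Cr; set SQ := Ey :\: Cr.
have cP : t < #|SP| := leq_trans (ar4 HCr hx) (hcount Ex).
have cQ : t < #|SQ| := leq_trans (ar4 HCr hy) (hcount Ey).
have dPQ : [disjoint SP & SQ].
  rewrite -setI_eq0; apply/eqP/setP => v; rewrite in_setI !in_setD in_set0.
  apply/negbTE/negP => /andP[/andP[vH vx] /andP[_ vy]].
  by move/eqP: neq; apply; rewrite -(HEx v vx vH) (HEy v vy vH).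
set Z := [set j | sh cx j == sh cy j].
have cZ : #|Z| <= t.
  by rewrite leqNgt; apply/negP => /share_agree E; move/eqP: neq; apply.
have HE : forall p q, p \in SP -> q \in SQ -> ~~ ((p \in Z) && (q \in Z)) ->
    Eb (adjx x) p q && Eb (adjx x) q p.
  move=> p q; rewrite !in_setD => /andP[pH pE] /andP[qH qE] nZ.
  rewrite /Eb (adj_sym x q p) andbb; apply/negP => Epq.
  have [e1 e2] := adj_share pH qH Epq.
  case/negP: nZ; rewrite !in_set.
  rewrite (HEx p pE pH) (HEy q qE qH) in e1 e2.
  by rewrite e1 e2 !eqxx.
have [M [HM cM _]] := build dPQ HE cP cQ
  (leq_trans (ar6 cP cQ cZ) (cardD2 Z dPQ)).
by move: (Hb M HM); rewrite cM ltnn.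
Qed.

Local Notation majxx := (majx alpha unrep mm m Cr A).
Local Notation majvv := (majv alpha unrep mm m Cr A).
Local Notation bbx := (bb alpha unrep mm m Cr A).
Local Notation rsx := (rs alpha unrep m Cr A).

Lemma rs_honest i j : j \notin Cr -> rsx i j = sh j i.
Proof. by move=> jC; rewrite /rs /recv1 (negbTE jC). Qed.

Lemma majx_ok i x c0 : x \notin Cr -> Ecalx x != set0 ->
  (forall e, e \in Ecalx x -> e \notin Cr -> sh e = sh c0) ->
  (2 * t).+1 <= #|Ecalx x| -> majxx i x = Some (sh c0 i).
Proof.
move=> xC ne HE hE.
rewrite /majx /recv5 (negbTE xC) /send5 /bit ne /=.
set E := Ecalx x in ne HE hE *.
have Hc : (#|E| + 2) %/ 2 <= #|[set j in E | rsx i j == sh c0 i]|.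
  apply: leq_trans (ar7 HCr hE) _; apply: leq_trans (hcount E) _.
  apply: subset_leq_card; apply/subsetP => j; rewrite in_setD in_set => /andP[jC jE].
  by rewrite jE rs_honest // (HE j jE jC) eqxx.
case: pickP => [v Hv | none]; last by move: (none (sh c0 i)); rewrite /= Hc.
congr Some; apply/eqP/negPn/negP => nv.
apply: (ar8 Hv Hc); apply: card_disjU.
  apply/setP=> j; rewrite in_set0 in_setI !in_set; apply/negbTE/negP.
  by case/andP=> /andP[_ /eqP->] /andP[_ /eqP]; move/eqP: nv.
by apply/subsetP=> j; rewrite in_setU !in_set; case/orP=> /andP[].
Qed.

Lemma majv_ok i (P : {ffun 'I_n -> F}) :
  (forall x, x \notin Cr -> bbx x -> majxx i x = Some (P i)) ->
  t.+1 <= #|[set x | bbx x] :\: Cr| -> majvv i = Some (P i).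
Proof.
move=> Hx hc; rewrite /majv.
have Hc : t.+1 <= #|[set x | bbx x && (majxx i x == Some (P i))]|.
  apply: leq_trans hc _; apply: subset_leq_card; apply/subsetP => x.
  rewrite in_setD !in_set => /andP[xC bx]; by rewrite bx (Hx x xC bx) eqxx.
case: pickP => [v Hv | none]; last by move: (none (P i)); rewrite /= Hc.
have [x] := exists_honest (ar5 HCr Hv).
rewrite in_set => /andP[bx /eqP Ex] xC.
by move: Ex; rewrite (Hx x xC bx) => -[->].
Qed.

Local Notation proceedx := (proceed alpha unrep mm m Cr A).
Local Notation outputx := (output alpha rep unrep mdef mm m Cr A).

Lemma bb_honest x : x \notin Cr -> bbx x = (Ecalx x != set0).
Proof. by move=> xC; rewrite /bb (negbTE xC). Qed.

Lemma DEC_ok (d0 : {ffun 'I_t.+1 -> F}) (w : {ffun 'I_n -> F}) :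
  0 < n -> (forall j, j \notin Cr -> w j = ENC alpha d0 j) -> DEC alpha w = d0.
Proof.
move=> n0 Hw.
have [h3 _] := tB_spec n0.
have H0 : hdist (ENC alpha d0) w <= t.
  apply: leq_trans HCr; apply: subset_leq_card; apply/subsetP => j; rewrite in_set.
  by apply: contraR => jC; rewrite Hw // eqxx.
rewrite /DEC; case: pickP => [d Hd | none]; last by move: (none d0); rewrite /= H0.
apply: (ENC_agree alpha_inj); move: Hd H0; rewrite /hdist => Hd H0.
apply: (ar9 h3 Hd H0).
set S1 := [set j | _ != _] in Hd; set S2 := [set j | _ != _] in H0.
apply: leq_trans (_ : #|~: (S1 :|: S2)| <= _).
  have := cardsC (S1 :|: S2); rewrite card_ord => E.
  have := cardsU S1 S2; move: E; move: #|S1 :|: S2| #|~: (S1 :|: S2)| #|S1| #|S2| #|S1 :&: S2|.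
  move=> a1 a2 a3 a4 a5; lia.
apply: subset_leq_card; apply/subsetP=> j; rewrite in_setC in_setU !in_set negb_or !negbK.
by case/andP=> /eqP-> /eqP->.
Qed.

Lemma main_proceed : proceedx -> exists2 c0, c0 \notin Cr &
  forall i, i \notin Cr -> outputx i = concat rep (blocks unrep (m c0)).
Proof.
move=> pr.
have hc : t.+1 <= #|[set x | bbx x] :\: Cr| := leq_trans (ar4 HCr pr) (hcount _).
have [x0] : exists x0, x0 \in [set x | bbx x] :\: Cr by apply/card_gt0P; exact: leq_trans hc.
rewrite in_setD in_set => /andP[x0C bx0].
have n0 : 0 < n := leq_ltn_trans (leq0n x0) (ltn_ord x0).
have ne0 : Ecalx x0 != set0 by rewrite -bb_honest.
have [c0 [c0C HE0 hE0 Hb0]] := view x0C ne0.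
have Hx : forall i x, x \notin Cr -> bbx x -> majxx i x = Some (sh c0 i).
  move=> i x xC bx; have ne : Ecalx x != set0 by rewrite -bb_honest.
  have [cx [cxC HEx hEx _]] := view xC ne.
  have Ecx : sh c0 = sh cx := cross Hb0 HE0 HEx hE0 hEx.
  apply: (majx_ok i xC ne _ hEx) => e eE eC; by rewrite (HEx e eE eC) Ecx.
have Hv : forall i, majvv i = Some (sh c0 i).
  by move=> i; apply: majv_ok => // x; exact: Hx.
exists c0 => // i iC.
rewrite /output pr; congr concat; apply: DEC_ok => // j jC.
by rewrite ffunE /recv6 (negbTE jC) /send6 pr Hv.
Qed.

Lemma cardH : #|~: Cr| = n - #|Cr|.
Proof. have E := cardsC Cr; rewrite card_ord in E. exact: ar15 E. Qed.

Lemma valid_Ecal m0 x : (forall i, i \notin Cr -> m i = m0) -> x \notin Cr ->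
  Ecalx x != set0.
Proof.
move=> Hm xC.
have n0 : 0 < n := leq_ltn_trans (leq0n x) (ltn_ord x).
have [h3 _] := tB_spec n0.
set G := adjx x.
have Hcl : forall y z, y \in ~: Cr -> z \in ~: Cr -> G y z.
  move=> y z; rewrite !in_setC => yC zC; apply: adj_of_share => //.
  by rewrite /share Hm // Hm.
have hC0 := star_C Hmm (adj_sym x) Hcl.
have hB := star_B Hmm (adj_sym x) Hcl.
rewrite setCK cardH in hC0; rewrite setCK in hB.
set C := sC mm G in hC0 *.
have hC : n - 2 * t <= #|C|.
  apply: ar10 HCr (leq_trans hC0 _); apply: subset_leq_card; exact: subsetIl.
have hD : n - t <= #|sD mm G|.
  rewrite /sD; have E := cardsC (sB mm G); rewrite card_ord in E.
  apply: ar14 E hB HCr.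
have hCH : t < #|C :&: ~: Cr| := ar11 HCr h3 hC0.
have HF : ~: Cr \subset FsD x C.
  apply/subsetP=> h hH; rewrite in_set; apply: leq_trans hCH _.
  apply: subset_leq_card; apply/subsetP=> z; rewrite in_setI => /andP[zC zH].
  by rewrite in_set zC andTb; exact: Hcl.
have HEs : ~: Cr \subset EsD x C.
  apply/subsetP=> h hH; rewrite in_set; apply: leq_trans (ar12 HCr h3) _.
  rewrite -cardH; apply: subset_leq_card; apply/subsetP=> z zH.
  by rewrite in_set (subsetP HF z zH) andTb; exact: Hcl.
have hF : (2 * t).+1 <= #|FsD x C|.
  by apply: leq_trans (ar12 HCr h3) _; rewrite -cardH; exact: subset_leq_card.
have hE : (2 * t).+1 <= #|EsD x C|.
  by apply: leq_trans (ar12 HCr h3) _; rewrite -cardH; exact: subset_leq_card.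
have -> : Ecalx x = EsD x C.
  by rewrite /Ecal STAR_eq -/G -/C hC hD /= -/(FsD x C) -/(EsD x C) hF hE.
apply/set0Pn; exists x; apply: (subsetP HEs); by rewrite in_setC.
Qed.

Lemma valid_proceed m0 x : (forall i, i \notin Cr -> m i = m0) -> x \notin Cr -> proceedx.
Proof.
move=> Hm xC.
have n0 : 0 < n := leq_ltn_trans (leq0n x) (ltn_ord x).
have [h3 _] := tB_spec n0.
rewrite /proceed; apply: leq_trans (ar12 HCr h3) _; rewrite -cardH.
apply: subset_leq_card; apply/subsetP=> y; rewrite in_setC => yC.
by rewrite in_set bb_honest // (valid_Ecal Hm yC).
Qed.

Lemma concat_blocks (x : (t.+1 * b).-tuple bool) : concat rep (blocks unrep x) = x.
Proof.
apply: eq_from_tnth => i; rewrite /concat tnth_mktuple /blocks ffunE unrepK.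
have bpos : 0 < b.
  rewrite lt0n; apply/eqP => b0; move: (ltn_ord i); move: (nat_of_ord i) => k.
  by rewrite b0 muln0.
have hb : i %% b < b := ltn_pmod _ bpos.
have hq : i %/ b < t.+1 by rewrite ltn_divLR.
rewrite -[i %% b]/(nat_of_ord (Ordinal hb)) nth_mktuple /= inordK //.
by rewrite -divn_eq (tnth_nth false).
Qed.

End Proto.

Lemma ar16 n t b B1 K0 : n <= 3 * t.+1 -> K0 = n * (2 * b) + n * n + n * n + n * b ->
  n * B1 + n * K0 <= 9 * (n * (t.+1 * b) + n * (n * n) + n * B1).
Proof.
move=> hn ->.
have h1 := leq_mul (leqnn (n * b)) hn.
nia.
Qed.

Lemma ar17 a c n : a + c = n -> c <= n.
Proof. by move=> <-; rewrite leq_addl. Qed.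

Lemma n_le n : n <= 3 * (tB n).+1.
Proof. case: n => // k; have [_ h] := tB_spec (isT : 0 < k.+1); lia. Qed.


Theorem mainTheorem10 :
  exists K : nat,
  forall (n b B1 : nat) (F : finFieldType) (alpha : 'I_n -> F)
         (rep : F -> b.-tuple bool) (unrep : b.-tuple bool -> F)
         (mdef : ((tB n).+1 * b).-tuple bool)
         (mm : rel 'I_n -> {set 'I_n * 'I_n}),
    injective alpha -> cancel rep unrep -> cancel unrep rep ->
    (forall E : rel 'I_n, is_max_matching E (mm E)) ->
  forall (m : 'I_n -> ((tB n).+1 * b).-tuple bool) (Cr : {set 'I_n})
         (A : adversary n F),
    #|Cr| <= tB n ->
    (* Agreement *)
    (forall i j, i \notin Cr -> j \notin Cr ->
       output alpha rep unrep mdef mm m Cr A i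
       = output alpha rep unrep mdef mm m Cr A j) /\
    (* Validity *)
    (forall m0, (forall i, i \notin Cr -> m i = m0) ->
       forall i, i \notin Cr -> output alpha rep unrep mdef mm m Cr A i = m0) /\
    (* Communication complexity O(n l + n^3 + n B(1)), l = (t+1) b *)
    comm_cost alpha unrep mm m Cr A B1
      <= K * (n * ((tB n).+1 * b) + n ^ 3 + n * B1).
Proof.
exists 9 => n b B1 F alpha rep unrep mdef mm ainj repK unrepK Hmm m Cr A HCr.
split; [|split].
- move=> i j iC jC.
  case: (boolP (proceed alpha unrep mm m Cr A)) => pr.
    have [c0 _ Ho] := @main_proceed n b F alpha rep unrep mdef mm ainj Hmm m Cr A HCr pr.
    by rewrite !Ho.
  by rewrite /output (negbTE pr).
- move=> m0 Hm i iC.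
  have pr := @valid_proceed n b F alpha unrep mm Hmm m Cr A HCr m0 i Hm iC.
  have [c0 c0C Ho] := @main_proceed n b F alpha rep unrep mdef mm ainj Hmm m Cr A HCr pr.
  by rewrite Ho // Hm // concat_blocks.
- rewrite /comm_cost.
  set K0 := n * (2 * b) + n * n + n * n + n * b.
  have hb : forall i, honest_bits alpha unrep mm m Cr A i <= K0.
    move=> i; rewrite /honest_bits /K0.
    apply: leq_add; first apply: leq_add => //.
      by apply: leq_mul => //; case: (send5 _ _ _ _ _ _ _).
    by apply: leq_mul => //; case: (send6 _ _ _ _ _ _ _).
  have hs : \sum_(i in ~: Cr) honest_bits alpha unrep mm m Cr A i <= n * K0.
    apply: (@leq_trans (\sum_(i in ~: Cr) K0)); first by apply: leq_sum => i _; exact: hb.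
    rewrite sum_nat_const; apply: leq_mul => //.
    have E := cardsC Cr; rewrite card_ord in E; exact: ar17 E.
  apply: leq_trans (leq_add (leqnn _) hs) _.
  have -> : n ^ 3 = n * (n * n) by rewrite !expnS expn0 muln1.
  exact: ar16 (n_le n) (erefl _).
Qed.
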